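(* Let $\eta>0$ and $L>0$ be the strong monotonicity and Lipschitz constants of a mapping $F$ as in the context, and let $\nu>0$. Let $e_0>0$ satisfy $\nu\ge L\sqrt{e_0/2}$, and define error functions recursively by $e_k(\gamma_0,\dots,\gamma_{k-1})=(1-\eta\gamma_{k-1})e_{k-1}(\gamma_0,\dots,\gamma_{k-2})+\gamma_{k-1}^2\nu^2$ for $k\ge1$. Let $\gamma_0^*=\frac{\eta}{2\nu^2}e_0$ and $\gamma_k^*=\gamma_{k-1}^*(1-\frac{\eta}{2}\gamma_{k-1}^* )$ for $k\ge1$. Then: (a) for all $k\ge0$, $e_k(\gamma_0^*,\dots,\gamma_{k-1}^* )=\frac{2\nu^2}{\eta}\gamma_k^*$; (b) for each $k\ge1$, $(\gamma_0^*,\dots,\gamma_{k-1}^* )$ minimizes $e_k$ over $\mathbb G_k\triangleq\{\alpha\in\mathbb R^k:0<\alpha_j\le\frac{\eta}{L^2},\ j=1,\dots,k\}$; more precisely, for every $(\gamma_0,\dots,\gamma_{k-1})\in\mathbb G_k$, $e_k(\gamma_0,\dots,\gamma_{k-1})-e_k(\gamma_0^*,\dots,\gamma_{k-1}^* )\ge\nu^2(\gamma_{k-1}-\gamma_{k-1}^* )^2$.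
   Context: $F:X\to\mathbb R^n$ is a single-valued mapping on a nonempty closed convex set $X\subseteq\mathbb R^n$ which is Lipschitz continuous with constant $L$ ($\|F(x)-F(y)\|\le L\|x-y\|$) and strongly monotone with constant $\eta$ ($(F(x)-F(y))^T(x-y)\ge\eta\|x-y\|^2$) on $X$. *)

(* Defs.v *)
From HB Require Import structures.
From mathcomp Require Import all_boot all_order all_algebra.
From mathcomp Require Import all_classical all_reals all_analysis.
Set Implicit Arguments. Unset Strict Implicit. Unset Printing Implicit Defensive.
Import Order.TTheory GRing.Theory Num.Theory.
Import numFieldNormedType.Exports.
Local Open Scope classical_set_scope.
Local Open Scope ring_scope.

Section Defs.
Variables (R : realType) (n : nat).

Definition dotv (u v : 'rV[R]_n) : R := \sum_(i < n) u 0 i * v 0 i.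
Definition enorm (u : 'rV[R]_n) : R := Num.sqrt (dotv u u).

Definition convex_subset (X : set 'rV[R]_n) : Prop :=
  forall x y t, X x -> X y -> 0 <= t <= 1 -> X (t *: x + (1 - t) *: y).

Definition lipschitz_with_on (X : set 'rV[R]_n) (F : 'rV[R]_n -> 'rV[R]_n) (L : R) :=
  forall x y, X x -> X y -> enorm (F x - F y) <= L * enorm (x - y).

Definition strongly_monotone_with_on (X : set 'rV[R]_n) (F : 'rV[R]_n -> 'rV[R]_n)
  (eta : R) :=
  forall x y, X x -> X y -> dotv (F x - F y) (x - y) >= eta * enorm (x - y) ^+ 2.
End Defs.

(* e_k(g_0,...,g_{k-1}) : error recursion, depends on g 0 .. g (k-1) only *)
Fixpoint err {R : realType} (eta nu e0 : R) (g : nat -> R) (k : nat) : R :=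
  match k with
  | 0 => e0
  | k'.+1 => (1 - eta * g k') * err eta nu e0 g k' + g k' ^+ 2 * nu ^+ 2
  end.

Fixpoint gstar {R : realType} (eta nu e0 : R) (k : nat) : R :=
  match k with
  | 0 => eta / (2 * nu ^+ 2) * e0
  | k'.+1 => gstar eta nu e0 k' * (1 - eta / 2 * gstar eta nu e0 k')
  end.

(* Main.v *)
Require Import Defs.
From HB Require Import structures.
From mathcomp Require Import all_boot all_order all_algebra.
From mathcomp Require Import all_classical all_reals all_analysis.
From mathcomp Require Import ring lra.
Import Order.TTheory GRing.Theory Num.Theory.
Import numFieldNormedType.Exports.
Local Open Scope classical_set_scope.
Local Open Scope ring_scope.

Lemma dotv_ge0 (R : realType) n (u : 'rV[R]_n) : 0 <= dotv u u.
Proof. by apply: sumr_ge0 => i _; rewrite -expr2 sqr_ge0. Qed.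

Lemma dotv_eq0 (R : realType) n (u : 'rV[R]_n) : dotv u u = 0 -> u = 0.
Proof.
move=> /eqP; rewrite /dotv psumr_eq0; last by move=> i _; rewrite -expr2 sqr_ge0.
move=> /allP H; apply/rowP => i; rewrite mxE.
have := H i (mem_index_enum i); rewrite /= -expr2 sqrf_eq0 => /eqP ->.
done.
Qed.

Lemma dotv_expand (R : realType) n (u v : 'rV[R]_n) t :
  dotv (t *: u - v) (t *: u - v) = t ^+ 2 * dotv u u - 2 * t * dotv u v + dotv v v.
Proof.
rewrite /dotv mulr_sumr mulr_sumr -sumrB -big_split /=.
by apply: eq_bigr => i _; rewrite !mxE; ring.
Qed.

Lemma enorm_sq (R : realType) n (u : 'rV[R]_n) : enorm u ^+ 2 = dotv u u.
Proof. by rewrite /enorm sqr_sqrtr // dotv_ge0. Qed.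

Lemma eta_le_L (R : realType) n (X : set 'rV[R]_n) (F : 'rV[R]_n -> 'rV[R]_n) (eta L : R) :
  (exists x y, X x /\ X y /\ x != y) ->
  lipschitz_with_on X F L -> strongly_monotone_with_on X F eta -> 0 < L -> eta <= L.
Proof.
move=> [x [y [Xx [Xy nxy]]]] Hl Hs L0.
have Hl2 := Hl x y Xx Xy; have Hs2 := Hs x y Xx Xy.
set u := F x - F y in Hl2 Hs2; set d := x - y in Hl2 Hs2.
have D0 : 0 < dotv d d.
  rewrite lt_def dotv_ge0 andbT; apply/eqP => /dotv_eq0 /eqP.
  by rewrite subr_eq0 (negbTE nxy).
have Hu : dotv u u <= L ^+ 2 * dotv d d.
  rewrite -!enorm_sq -exprMn; apply: lerXn2r; rewrite ?nnegrE //.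

    by have := sqrtr_ge0 (dotv u u).
  by apply: mulr_ge0; [exact: ltW | have := sqrtr_ge0 (dotv d d)].
rewrite enorm_sq in Hs2.
have := @dotv_ge0 _ _ (L^-1 *: u - d); rewrite dotv_expand.
have Hsym : dotv u d = dotv u d by [].
move=> H.
have Li : 0 < L^-1 by rewrite invr_gt0.
have H1 : L^-1 ^+ 2 * dotv u u <= dotv d d.
  have : L^-1 ^+2 * dotv u u <= L^-1 ^+ 2 * (L ^+ 2 * dotv d d).
    by rewrite ler_wpM2l // exprn_ge0 // ltW.
  by rewrite mulrA -exprMn mulVf ?gt_eqF // expr1n mul1r.
have H2 : 2 * L^-1 * (eta * dotv d d) <= 2 * L^-1 * dotv u d.
  by rewrite ler_wpM2l // mulr_ge0 // ltW.
have H3 : eta * L^-1 * dotv d d <= dotv d d by nra.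
have H4 : eta * L^-1 <= 1.
  by rewrite -(ler_pM2r D0) mul1r.
have : eta * L^-1 * L <= 1 * L by rewrite ler_pM2r.
by rewrite -mulrA mulVf ?gt_eqF // mulr1 mul1r.
Qed.

Lemma partA (R : realType) (eta nu e0 : R) : 0 < eta -> 0 < nu -> forall k,
  err eta nu e0 (gstar eta nu e0) k = 2 * nu ^+ 2 / eta * gstar eta nu e0 k.
Proof.
move=> he hn; elim=> [|k IH] /=.
  by field; rewrite ?gt_eqF // ?mulf_neq0 ?expf_neq0 ?gt_eqF.
by rewrite IH; field; rewrite gt_eqF.
Qed.

Lemma step_ineq (R : realType) (eta nu g gs E Es : R) :
  eta * Es = 2 * nu ^+ 2 * gs -> 0 <= 1 - eta * g -> Es <= E ->
  nu ^+ 2 * (g - gs) ^+ 2 <=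
  ((1 - eta * g) * E + g ^+ 2 * nu ^+ 2) - ((1 - eta * gs) * Es + gs ^+ 2 * nu ^+ 2).
Proof.
move=> H1 H2 H3.
have -> : ((1 - eta * g) * E + g ^+ 2 * nu ^+ 2) - ((1 - eta * gs) * Es + gs ^+ 2 * nu ^+ 2)
  = (1 - eta * g) * (E - Es) + (gs - g) * (eta * Es - 2 * nu ^+ 2 * gs) + nu ^+ 2 * (g - gs) ^+ 2 by ring.
rewrite H1 subrr mulr0 addr0 lerDr; apply: mulr_ge0 => //; by rewrite subr_ge0.
Qed.

Lemma gstar_bounds (R : realType) (eta L nu e0 : R) :
  0 < eta -> 0 < L -> eta <= L -> 0 < nu -> 0 < e0 -> e0 * L ^+ 2 <= 2 * nu ^+ 2 ->
  forall j, 0 < gstar eta nu e0 j <= eta / L ^+ 2.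
Proof.
move=> he hL heL hn he0 key.
have hL2 : 0 < L ^+ 2 by rewrite exprn_gt0.
have hn2 : 0 < nu ^+ 2 by rewrite exprn_gt0.
have eL : eta * (eta / L ^+ 2) <= 1.
  rewrite mulrA ler_pdivrMr // mul1r; nra.
elim=> [|j IH] /=.
  apply/andP; split; first by rewrite mulr_gt0 // divr_gt0 // mulr_gt0.
  rewrite -subr_le0.
  have -> : eta / (2 * nu ^+ 2) * e0 - eta / L ^+ 2
     = (eta / (2 * nu ^+ 2 * L ^+ 2)) * (e0 * L ^+ 2 - 2 * nu ^+ 2).
    by field; rewrite ?gt_eqF // ?mulr_gt0.
  apply: mulr_ge0_le0; first by rewrite ltW // divr_gt0 // !mulr_gt0.
  by rewrite subr_le0.
move/andP: IH => [g0 gb].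
set g := gstar eta nu e0 j in g0 gb *.
have eg : eta * g <= 1.
  apply: le_trans eL; by rewrite ler_pM2l.
have eg0 : 0 <= eta * g by rewrite mulr_ge0 // ltW.
apply/andP; split.
  by apply: mulr_gt0 => //; nra.
apply: le_trans gb; rewrite ger_pMr //; nra.
Qed.

Theorem proposition1 (R : realType) (n : nat) (X : set 'rV[R]_n)
  (F : 'rV[R]_n -> 'rV[R]_n) (eta L nu e0 : R) :
  X !=set0 -> closed X -> convex_subset X ->
  (exists x y, X x /\ X y /\ x != y) ->
  lipschitz_with_on X F L -> strongly_monotone_with_on X F eta ->
  0 < eta -> 0 < L -> 0 < nu -> 0 < e0 -> L * Num.sqrt (e0 / 2) <= nu ->
  (forall k : nat, err eta nu e0 (gstar eta nu e0) k
                   = 2 * nu ^+ 2 / eta * gstar eta nu e0 k) /\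
  (forall k : nat, (1 <= k)%N ->
     (forall j : nat, (j < k)%N -> 0 < gstar eta nu e0 j <= eta / L ^+ 2) /\
     (forall g : nat -> R, (forall j : nat, (j < k)%N -> 0 < g j <= eta / L ^+ 2) ->
        err eta nu e0 g k - err eta nu e0 (gstar eta nu e0) k
          >= nu ^+ 2 * (g k.-1 - gstar eta nu e0 k.-1) ^+ 2)).
Proof.
move=> _ _ _ hxy hl hs he hL hn he0 hsq.
have heL := @eta_le_L _ _ _ _ _ _ hxy hl hs hL.
have key : e0 * L ^+ 2 <= 2 * nu ^+ 2.
  have : (L * Num.sqrt (e0 / 2)) ^+ 2 <= nu ^+ 2.
    apply: lerXn2r; rewrite ?nnegrE //.
      apply: mulr_ge0; [exact: ltW | by have := sqrtr_ge0 (e0 / 2)].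
    exact: ltW.
  rewrite exprMn sqr_sqrtr; last by rewrite divr_ge0 // ltW.
  move=> H; have : 2 * (L ^+ 2 * (e0 / 2)) <= 2 * nu ^+ 2 by rewrite ler_pM2l.
  by have -> : 2 * (L ^+ 2 * (e0 / 2)) = e0 * L ^+ 2 by field.
have GB := @gstar_bounds _ eta L nu e0 he hL heL hn he0 key.
have PA := @partA _ eta nu e0 he hn.
split => // k k1; split => // g Hg.
have eL : eta * (eta / L ^+ 2) <= 1.
  rewrite mulrA ler_pdivrMr ?exprn_gt0 // mul1r; nra.
have Hc : forall j, (j < k)%N -> 0 <= 1 - eta * g j.
  move=> j /Hg /andP [g0 gb]; rewrite subr_ge0; apply: le_trans eL.
  by rewrite ler_pM2l.
have Hes : forall j, eta * err eta nu e0 (gstar eta nu e0) j = 2 * nu ^+ 2 * gstar eta nu e0 j.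
  by move=> j; rewrite PA; field; rewrite gt_eqF.
have Hmono : forall j, (j <= k)%N ->
   err eta nu e0 (gstar eta nu e0) j <= err eta nu e0 g j.
  elim=> [|j IH] hj //=.
  have H := @step_ineq _ _ _ _ _ _ _ (Hes j) (Hc j hj) (IH (ltnW hj)).
  have H0 : 0 <= nu ^+ 2 * (g j - gstar eta nu e0 j) ^+ 2 by rewrite mulr_ge0 // ?sqr_ge0.
  lra.
case: k k1 Hc Hmono {Hg} => [//|k] _ Hc Hmono /=.
exact: (@step_ineq _ _ _ _ _ _ _ (Hes k) (Hc k (ltnSn k)) (Hmono k (ltnW (ltnSn k)))).
Qed.
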